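(* Every hyperbola $\mathcal H$ in the plane is the projection to the $xy$-plane of the intersection of two HR-cones. Moreover, the set of all pairs of HR-cones whose intersection projects onto $\mathcal H$ is faithfully parameterized by (i.e. in bijective correspondence with the points of) a semialgebraic surface in $\mathbb{R}^4$.
   Context: An HR-cone $(A,{\bf a})$, for $A$ a real symmetric positive definite $2\times2$ matrix with $\det A=1$ and ${\bf a}\in\mathbb{R}^2$, is the set $\{(x,y,z)\in\mathbb{R}^3: z^2=({\bf x}-{\bf a})^TA({\bf x}-{\bf a}),\ {\bf x}=(x,y)^T\}$; distinct pairs $(A,{\bf a})$ give distinct cones.
   Formalization: The parameterizing set is a semialgebraic subset of R⁴ of dimension 3 rather than a surface, the pairs of HR-cones are ordered, and the bijection onto it has semialgebraic graph. Apart from conventions, each condition added here is assumed in the paper as well or is needed for the statement above to hold. *)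

(* Defs.v *)
From HB Require Import structures.
From mathcomp Require Import all_boot all_order all_algebra.
From mathcomp Require Import reals.
Set Implicit Arguments. Unset Strict Implicit. Unset Printing Implicit Defensive.
Import Order.TTheory GRing.Theory Num.Theory.
Local Open Scope ring_scope.

Section Defs.
Variable R : realType.

Inductive pexpr (n : nat) : Type :=
| PVar of 'I_n
| PConst of R
| POpp of pexpr n
| PAdd of pexpr n & pexpr n
| PMul of pexpr n & pexpr n.

Fixpoint peval (n : nat) (p : pexpr n) (x : 'I_n -> R) : R :=
  match p with
  | PVar i => x i
  | PConst c => c
  | POpp p => - peval p x
  | PAdd p q => peval p x + peval q x
  | PMul p q => peval p x * peval q x
  end.

Inductive sformula (n : nat) : Type :=
| SPos of pexpr n
| SZero of pexpr n
| SNot of sformula n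
| SAnd of sformula n & sformula n
| SOr of sformula n & sformula n.

Fixpoint sholds (n : nat) (F : sformula n) (x : 'I_n -> R) : Prop :=
  match F with
  | SPos p => 0 < peval p x
  | SZero p => peval p x = 0
  | SNot F => ~ sholds F x
  | SAnd F G => sholds F x /\ sholds G x
  | SOr F G => sholds F x \/ sholds G x
  end.

Definition semialgebraic (n : nat) (S : ('I_n -> R) -> Prop) : Prop :=
  exists F : sformula n, forall x, S x <-> sholds F x.

Definition has_interior (d : nat) (T : ('I_d -> R) -> Prop) : Prop :=
  exists (y0 : 'I_d -> R) (e : R), 0 < e /\
    forall y : 'I_d -> R, (forall j, `|y j - y0 j| < e) -> T y.

Definition coord_proj (n d : nat) (f : 'I_d -> 'I_n)
  (S : ('I_n -> R) -> Prop) : ('I_d -> R) -> Prop :=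
  fun y => exists x, S x /\ forall j, y j = x (f j).

Definition sa_dim (n : nat) (S : ('I_n -> R) -> Prop) (d : nat) : Prop :=
  (exists f : 'I_d -> 'I_n, injective f /\ has_interior (coord_proj f S)) /\
  (forall f : 'I_d.+1 -> 'I_n, injective f -> ~ has_interior (coord_proj f S)).

(* H is a (non-degenerate) hyperbola: zero set of
   a x^2 + b xy + c y^2 + d x + e y + f with b^2 - 4ac > 0 and nonzero
   determinant of the 3x3 symmetric matrix of the conic. *)
Definition hyperbola (H : R * R -> Prop) : Prop :=
  exists a b c d e f : R,
    b ^+ 2 - 4 * a * c > 0 /\
    \det (\matrix_(i < 3, j < 3)
            (nth 0 (nth [::] [:: [:: a; b / 2; d / 2]; [:: b / 2; c; e / 2];
                              [:: d / 2; e / 2; f]] i) j))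
      != 0 /\
    forall p : R * R,
      H p <-> a * p.1 ^+ 2 + b * p.1 * p.2 + c * p.2 ^+ 2 + d * p.1 + e * p.2 + f = 0.

Definition vec2 (x y : R) : 'cV[R]_2 := \col_(i < 2) [:: x; y]`_i.

Definition HRparam (A : 'M[R]_2) (a : 'cV[R]_2) : Prop :=
  A^T = A /\
  (forall v : 'cV[R]_2, v != 0 -> 0 < (v^T *m A *m v) 0 0) /\
  \det A = 1.

Definition HRcone (A : 'M[R]_2) (a : 'cV[R]_2) (p : R * R * R) : Prop :=
  let: (x, y, z) := p in
  let w := vec2 x y - a in
  z ^+ 2 = (w^T *m A *m w) 0 0.

Definition cone_param := ('M[R]_2 * 'cV[R]_2)%type.

Definition proj_inter (C1 C2 : cone_param) (q : R * R) : Prop :=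
  exists z : R, HRcone C1.1 C1.2 (q.1, q.2, z) /\ HRcone C2.1 C2.2 (q.1, q.2, z).

Definition cone_pairs_over (H : R * R -> Prop) (P : cone_param * cone_param) : Prop :=
  HRparam P.1.1 P.1.2 /\ HRparam P.2.1 P.2.2 /\
  forall q, proj_inter P.1 P.2 q <-> H q.

Definition encode_pair (P : cone_param * cone_param) : 'I_10 -> R :=
  fun i => [:: P.1.1 0 0; P.1.1 0 1; P.1.1 1 1; P.1.2 0 0; P.1.2 1 0;
               P.2.1 0 0; P.2.1 0 1; P.2.1 1 1; P.2.2 0 0; P.2.2 1 0]`_i.

Definition restricted_graph (D : cone_param * cone_param -> Prop)
  (Phi : cone_param * cone_param -> 'I_4 -> R) : ('I_14 -> R) -> Prop :=
  fun w => exists P, D P /\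
    forall i : 'I_14,
      w i = if (i < 10)%N then encode_pair P (inord i) else Phi P (inord (i - 10)).

End Defs.

(* Main.v *)
Require Import Defs.
From HB Require Import structures.
From mathcomp Require Import all_boot all_order all_algebra.
From mathcomp Require Import reals ring lra.
Import Order.TTheory GRing.Theory Num.Theory.
Local Open Scope ring_scope.

Module T3.
Set Implicit Arguments. Unset Strict Implicit.
Local Open Scope ring_scope.
Section LC.
Variable T : comNzRingType.
Lemma lcE (P Q L R : T) : P = Q -> L - R = P - Q -> L = R.
Proof. by move=> -> /eqP; rewrite subrr subr_eq0 => /eqP. Qed.
Lemma addE (a b c d : T) : a = b -> c = d -> a + c = b + d.
Proof. by move=> -> ->. Qed.
Lemma mulE (k a b : T) : a = b -> k * a = k * b.
Proof. by move=> ->. Qed.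
End LC.
Ltac lc E := apply: (lcE E); ring.
Ltac lcf E := apply: (lcE E); field; try done.

Section Alg.
Variable R : realType.

Lemma mul0_l (x y : R) : x != 0 -> x * y = 0 -> y = 0.
Proof. by move=> Hx /eqP; rewrite mulf_eq0 (negbTE Hx) => /eqP. Qed.

Definition qp (A B C D E F x y : R) :=
  A * x ^+ 2 + B * x * y + C * y ^+ 2 + D * x + E * y + F.

Lemma ball_poly (k11 k12 k22 l1 l2 k0 c1 c2 e : R) : 0 < e ->
  (forall y1 y2, `|y1 - c1| < e -> `|y2 - c2| < e ->
     qp k11 k12 k22 l1 l2 k0 y1 y2 = 0) ->
  k11 = 0 /\ k12 = 0 /\ k22 = 0 /\ l1 = 0 /\ l2 = 0 /\ k0 = 0.
Proof.
move=> He H.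
set s := e / 2.
have Hs : 0 < s by rewrite divr_gt0.
have Hse : `|s| < e by rewrite gtr0_norm // /s ltr_pdivrMr // ltr_pMr // ltr1n.
have Hmse : `|- s| < e by rewrite normrN.
have H0 : `|0 : R| < e by rewrite normr0.
clearbody s.
have P00 := H c1 c2; rewrite !subrr in P00; have {}P00 := P00 H0 H0.
have Pp0 := H (c1 + s) c2; rewrite addrAC !subrr add0r in Pp0; have {}Pp0 := Pp0 Hse H0.
have Pm0 := H (c1 - s) c2; rewrite addrAC !subrr add0r in Pm0; have {}Pm0 := Pm0 Hmse H0.
have P0p := H c1 (c2 + s); rewrite addrAC !subrr add0r in P0p; have {}P0p := P0p H0 Hse.
have P0m := H c1 (c2 - s); rewrite addrAC !subrr add0r in P0m; have {}P0m := P0m H0 Hmse.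
have Ppp := H (c1 + s) (c2 + s); rewrite !(addrAC _ s) !subrr !add0r in Ppp; have {}Ppp := Ppp Hse Hse.
move: P00 Pp0 Pm0 P0p P0m Ppp; rewrite /qp => P00 Pp0 Pm0 P0p P0m Ppp.
have sn0 : s ^+ 2 != 0 by rewrite expf_neq0 // gt_eqF.
have K11 : k11 = 0.
  have : 2 * s ^+ 2 * k11 = 0.
    lc (addE (addE Pp0 Pm0) (mulE (-2) P00)).
  by apply: mul0_l; rewrite mulf_neq0 // pnatr_eq0.
have K22 : k22 = 0.
  have : 2 * s ^+ 2 * k22 = 0.
    lc (addE (addE P0p P0m) (mulE (-2) P00)).
  by apply: mul0_l; rewrite mulf_neq0 // pnatr_eq0.
have K12 : k12 = 0.
  have : s ^+ 2 * k12 = 0.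
    rewrite K11 K22 in Ppp Pp0 P0p P00.
    lc (addE (addE Ppp (mulE (-1) Pp0)) (addE (mulE (-1) P0p) P00)).
  exact: mul0_l.
have sn1 : s != 0 by rewrite gt_eqF.
have L1 : l1 = 0.
  have : 2 * s * l1 = 0.
    rewrite K11 K12 in Pp0 Pm0.
    lc (addE Pp0 (mulE (-1) Pm0)).
  by apply: mul0_l; rewrite mulf_neq0 // pnatr_eq0.
have L2 : l2 = 0.
  have : 2 * s * l2 = 0.
    rewrite K22 K12 in P0p P0m.
    lc (addE P0p (mulE (-1) P0m)).
  by apply: mul0_l; rewrite mulf_neq0 // pnatr_eq0.
do 5 (split => //).
by rewrite -P00 K11 K12 K22 L1 L2; ring.
Qed.


Lemma peval_cont n (p : pexpr R n) (x0 : 'I_n -> R) (e : R) : 0 < e ->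
  exists d, 0 < d /\ forall x, (forall i, `|x i - x0 i| < d) ->
     `|peval p x - peval p x0| < e.
Proof.
elim: p e => [i|r|p IH|p IHp q IHq|p IHp q IHq] e He /=.
- by exists e; split => // x Hx; apply: Hx.
- by exists 1; split => // x _; rewrite subrr normr0.
- have [d [Hd Hx]] := IH e He; exists d; split => // x Hxd.
  by rewrite -opprD normrN; apply: Hx.
- have He2 : 0 < e / 2 by rewrite divr_gt0.
  have [d1 [Hd1 H1]] := IHp _ He2; have [d2 [Hd2 H2]] := IHq _ He2.
  exists (Num.min d1 d2); split; first by rewrite lt_min Hd1.
  move=> x Hx.
  have Hx1 : forall i, `|x i - x0 i| < d1.
    by move=> i; have := Hx i; rewrite lt_min => /andP[].
  have Hx2 : forall i, `|x i - x0 i| < d2.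
    by move=> i; have := Hx i; rewrite lt_min => /andP[].
  have := H1 _ Hx1; have := H2 _ Hx2.
  set P := peval p x; set P0 := peval p x0; set Q := peval q x; set Q0 := peval q x0.
  move=> HQ HP.
  have -> : P + Q - (P0 + Q0) = (P - P0) + (Q - Q0) by ring.
  apply: (le_lt_trans (ler_normD _ _)).
  have -> : e = e / 2 + e / 2 by field.
  by rewrite ltrD.
- set P0 := peval p x0; set Q0 := peval q x0.
  have HP0 : 0 < `|P0| + 1 by rewrite ltr_pwDr // normr_ge0.
  have HQ0 : 0 < `|Q0| + 1 by rewrite ltr_pwDr // normr_ge0.
  have Hep : 0 < Num.min 1 (e / (2 * (`|Q0| + 1))).
    by rewrite lt_min ltr01 /= divr_gt0 // mulr_gt0.
  have Heq : 0 < Num.min 1 (e / (2 * (`|P0| + 1))).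
    by rewrite lt_min ltr01 /= divr_gt0 // mulr_gt0.
  have [d1 [Hd1 H1]] := IHp _ Hep; have [d2 [Hd2 H2]] := IHq _ Heq.
  exists (Num.min d1 d2); split; first by rewrite lt_min Hd1.
  move=> x Hx.
  have Hx1 : forall i, `|x i - x0 i| < d1.
    by move=> i; have := Hx i; rewrite lt_min => /andP[].
  have Hx2 : forall i, `|x i - x0 i| < d2.
    by move=> i; have := Hx i; rewrite lt_min => /andP[].
  have := H1 _ Hx1; have := H2 _ Hx2.
  rewrite !lt_min => /andP[HQ1 HQe] /andP[HP1 HPe].
  set P := peval p x in HP1 HPe *; set Q := peval q x in HQ1 HQe *.
  have -> : P * Q - P0 * Q0 = (P - P0) * Q + P0 * (Q - Q0) by ring.
  apply: (le_lt_trans (ler_normD _ _)); rewrite !normrM.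
  have HQb : `|Q| <= `|Q0| + 1.
    have -> : Q = (Q - Q0) + Q0 by ring.
    apply: (le_trans (ler_normD _ _)); rewrite addrC lerD2l; exact: ltW.
  have T1 : `|P - P0| * `|Q| <= e / 2.
    apply: (le_trans (y := (e / (2 * (`|Q0| + 1))) * (`|Q0| + 1))).
      apply: ler_pM; [exact: normr_ge0 | exact: normr_ge0 | exact: ltW | exact: HQb].
    rewrite le_eqVlt; apply/orP; left; apply/eqP; field.
    by rewrite gt_eqF.
  have T2 : `|P0| * `|Q - Q0| < e / 2.
    apply: (le_lt_trans (y := `|P0| * (e / (2 * (`|P0| + 1))))).
      apply: ler_wpM2l; [exact: normr_ge0 | exact: ltW].
    rewrite -subr_gt0.
    have -> : e / 2 - `|P0| * (e / (2 * (`|P0| + 1))) = e / (2 * (`|P0| + 1)).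
      by field; rewrite gt_eqF.
    by rewrite divr_gt0 // mulr_gt0.
  have -> : e = e / 2 + e / 2 by field.
  exact: ler_ltD.
Qed.

Lemma near_pos n (p : pexpr R n) (x0 : 'I_n -> R) : 0 < peval p x0 ->
  exists d, 0 < d /\ forall x, (forall i, `|x i - x0 i| < d) -> 0 < peval p x.
Proof.
move=> Hp; have [d [Hd H]] := peval_cont p x0 Hp.
exists d; split => // x /H; rewrite ltr_norml => /andP[H1 _].
by move: H1; rewrite ltrBrDr addrC subrr.
Qed.

Lemma near_neq0 n (p : pexpr R n) (x0 : 'I_n -> R) : peval p x0 != 0 ->
  exists d, 0 < d /\ forall x, (forall i, `|x i - x0 i| < d) -> peval p x != 0.
Proof.
move=> Hp; have Hn : 0 < `|peval p x0| by rewrite normr_gt0.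
have [d [Hd H]] := peval_cont p x0 Hn.
exists d; split => // x /H Hx; apply/negP => /eqP E; move: Hx.
by rewrite E sub0r normrN ltxx.
Qed.

Definition f2 (y1 y2 : R) : 'I_2 -> R := fun i => if i == ord0 then y1 else y2.

Lemma f2_near (x0 : 'I_2 -> R) d y1 y2 : `|y1 - x0 ord0| < d -> `|y2 - x0 ord_max| < d ->
  forall i, `|f2 y1 y2 i - x0 i| < d.
Proof. by move=> H1 H2 [[|[|//]] Hi] //=; [ rewrite (_ : Ordinal Hi = ord0) // ; apply/val_inj | rewrite (_ : Ordinal Hi = ord_max) //; apply/val_inj]. Qed.

Section Hyp.
Variables ha hb hc hd he hf : R.
Hypothesis Hdisc : 0 < hb ^+ 2 - 4 * ha * hc.

Lemma indef (k : R) : k != 0 -> exists w1 w2, 0 < k * (ha * w1 ^+ 2 + hb * w1 * w2 + hc * w2 ^+ 2).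
Proof.
move=> Hk.
have [Ha|Ha] := eqVneq ha 0.
  have Hb : hb != 0.
    by apply/eqP => Hb; move: Hdisc; rewrite Hb Ha; rewrite expr0n /= mulr0 mul0r subrr ltxx.
  exists ((k - hc) / hb), 1; rewrite Ha.
  have -> : 0 * ((k - hc) / hb) ^+ 2 + hb * ((k - hc) / hb) * 1 + hc * 1 ^+ 2 = k.
    by field.
  by rewrite -expr2 exprn_even_gt0.
have [Hka|Hka] := ltP 0 (k * ha).
  by exists 1, 0; rewrite expr1n mulr1 mulr0 expr0n /= mulr0 !addr0.
have Hka' : k * ha < 0.
  by rewrite lt_neqAle Hka andbT mulf_neq0.
exists hb, (- 2 * ha).
have -> : k * (ha * hb ^+ 2 + hb * hb * (- 2 * ha) + hc * (- 2 * ha) ^+ 2) =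
   (- (k * ha)) * (hb ^+ 2 - 4 * ha * hc) by ring.
by rewrite mulr_gt0 // oppr_gt0.
Qed.

Definition del := ha * hc - hb ^+ 2 / 4.
Definition x01 := (hb * he / 4 - hc * hd / 2) / del.
Definition x02 := (hb * hd / 4 - ha * he / 2) / del.
Definition h0 := qp ha hb hc hd he hf x01 x02.

Lemma del_lt0 : del < 0.
Proof.
have -> : del = - ((hb ^+ 2 - 4 * ha * hc) / 4) by rewrite /del; field.
by rewrite oppr_lt0 divr_gt0.
Qed.

Lemma del_neq0 : del != 0.
Proof. by rewrite lt_eqF // del_lt0. Qed.

Lemma den_neq0 : ha * hc * 4 - hb ^+ 2 != 0.
Proof.
have -> : ha * hc * 4 - hb ^+ 2 = - (hb ^+ 2 - 4 * ha * hc) by ring.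
by rewrite oppr_eq0 gt_eqF.
Qed.

Lemma center1 : 2 * ha * x01 + hb * x02 + hd = 0.
Proof. rewrite /x01 /x02 /del; field; exact: den_neq0. Qed.
Lemma center2 : hb * x01 + 2 * hc * x02 + he = 0.
Proof. rewrite /x01 /x02 /del; field; exact: den_neq0. Qed.

Lemma hshift y1 y2 : qp ha hb hc hd he hf (x01 + y1) (x02 + y2) =
  ha * y1 ^+ 2 + hb * y1 * y2 + hc * y2 ^+ 2 + h0.
Proof. rewrite /h0 /qp; lc (addE (mulE y1 center1) (mulE y2 center2)). Qed.

Lemma gshift (Ga Gb Gc Gd Ge Gf y1 y2 : R) : qp Ga Gb Gc Gd Ge Gf (x01 + y1) (x02 + y2) =
  Ga * y1 ^+ 2 + Gb * y1 * y2 + Gc * y2 ^+ 2 +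
  (2 * Ga * x01 + Gb * x02 + Gd) * y1 + (Gb * x01 + 2 * Gc * x02 + Ge) * y2 +
  qp Ga Gb Gc Gd Ge Gf x01 x02.
Proof. rewrite /qp; ring. Qed.


Definition Mq (w1 w2 : R) := ha * w1 ^+ 2 + hb * w1 * w2 + hc * w2 ^+ 2.

Lemma Klem (Ga Gb Gc Gd Ge Gf : R) : h0 != 0 ->
  (forall x y, qp Ga Gb Gc Gd Ge Gf x y = 0 <-> qp ha hb hc hd he hf x y = 0) ->
  exists l, l != 0 /\ Ga = l * ha /\ Gb = l * hb /\ Gc = l * hc /\
            Gd = l * hd /\ Ge = l * he /\ Gf = l * hf.
Proof.
move=> Hh0 HZ.
set n1 := 2 * Ga * x01 + Gb * x02 + Gd.
set n2 := Gb * x01 + 2 * Gc * x02 + Ge.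
set g0 := qp Ga Gb Gc Gd Ge Gf x01 x02.
have Claim1 : forall w1 w2, 0 < - h0 * Mq w1 w2 ->
    n1 * w1 + n2 * w2 = 0 /\
    h0 * (Ga * w1 ^+ 2 + Gb * w1 * w2 + Gc * w2 ^+ 2) - g0 * Mq w1 w2 = 0.
  move=> w1 w2 Hpos.
  set m := Mq w1 w2 in Hpos *.
  have Hm : m != 0 by apply/eqP => E; move: Hpos; rewrite E mulr0 ltxx.
  set t := - h0 / m.
  have Ht : 0 < t.
    have -> : t = (- h0 * m) / (m ^+ 2) by rewrite /t; field.
    by rewrite divr_gt0 // exprn_even_gt0.
  set s := Num.sqrt t.
  have Hs : 0 < s by rewrite sqrtr_gt0.
  have Bs : s ^+ 2 = t by rewrite sqr_sqrtr // ltW.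
  have Ct : t * m = - h0 by rewrite /t; field.
  have Hp : qp ha hb hc hd he hf (x01 + s * w1) (x02 + s * w2) = 0.
    rewrite hshift.
    have -> : ha * (s * w1) ^+ 2 + hb * (s * w1) * (s * w2) + hc * (s * w2) ^+ 2 =
       s ^+ 2 * m by rewrite /m /Mq; ring.
    by rewrite Bs Ct addNr.
  have Hm' : qp ha hb hc hd he hf (x01 + - s * w1) (x02 + - s * w2) = 0.
    rewrite hshift.
    have -> : ha * (- s * w1) ^+ 2 + hb * (- s * w1) * (- s * w2) + hc * (- s * w2) ^+ 2 =
       s ^+ 2 * m by rewrite /m /Mq; ring.
    by rewrite Bs Ct addNr.
  move/HZ: Hp; rewrite gshift -/n1 -/n2 -/g0 => Ep.
  move/HZ: Hm'; rewrite gshift -/n1 -/n2 -/g0 => Em.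
  split.
    apply: (@mul0_l (2 * s)); first by rewrite mulf_neq0 ?pnatr_eq0 // gt_eqF.
    lc (addE Ep (mulE (-1) Em)).
  set G := Ga * w1 ^+ 2 + Gb * w1 * w2 + Gc * w2 ^+ 2.
  clearbody s t m n1 n2 g0.
  apply: (@mul0_l 2); first by rewrite pnatr_eq0.
  have EG : G = Ga * w1 ^+ 2 + Gb * w1 * w2 + Gc * w2 ^+ 2 by [].
  clearbody G.
  lc (addE (addE (addE (mulE (- m) (addE Ep Em)) (mulE (2 * m * G) Bs)) (mulE (2 * G) Ct)) (mulE (- 2 * m * s ^+ 2) EG)).
have Hmh : - h0 != 0 by rewrite oppr_eq0.
have [w1 [w2 Hw]] := indef Hmh.
pose pe : pexpr R 2 := PMul (PConst _ (- h0)) (PAdd (PAdd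
   (PMul (PConst _ ha) (PMul (PVar _ ord0) (PVar _ ord0)))
   (PMul (PMul (PConst _ hb) (PVar _ ord0)) (PVar _ ord_max)))
   (PMul (PConst _ hc) (PMul (PVar _ ord_max) (PVar _ ord_max)))).
have peE : forall y1 y2, peval pe (f2 y1 y2) = - h0 * Mq y1 y2.
  by move=> y1 y2; rewrite /= /f2 /= /Mq !expr2 !mulrA.
have Hpe : 0 < peval pe (f2 w1 w2) by rewrite peE.
have [d [Hd Hnear]] := near_pos Hpe.
have Hball : forall y1 y2, `|y1 - w1| < d -> `|y2 - w2| < d -> 0 < - h0 * Mq y1 y2.
  move=> y1 y2 H1 H2; rewrite -peE; apply: Hnear; exact: f2_near.
have HL : forall y1 y2, `|y1 - w1| < d -> `|y2 - w2| < d -> qp 0 0 0 n1 n2 0 y1 y2 = 0.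
  move=> y1 y2 H1 H2; have [E _] := Claim1 y1 y2 (Hball y1 y2 H1 H2).
  by rewrite -[RHS]E /qp; ring.
have [_ [_ [_ [N1 [N2 _]]]]] := ball_poly Hd HL.
have HN : forall y1 y2, `|y1 - w1| < d -> `|y2 - w2| < d ->
   qp (h0 * Ga - g0 * ha) (h0 * Gb - g0 * hb) (h0 * Gc - g0 * hc) 0 0 0 y1 y2 = 0.
  move=> y1 y2 H1 H2; have [_ E] := Claim1 y1 y2 (Hball y1 y2 H1 H2).
  by rewrite -[RHS]E /qp /Mq; ring.
have [Ka [Kb [Kc _]]] := ball_poly Hd HN.
have Hg0 : g0 != 0.
  apply/eqP => E; move/negP: Hh0; apply; apply/eqP; rewrite /h0; apply/HZ; exact: E.
exists (g0 / h0); split; first by rewrite mulf_neq0 // invr_eq0.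
have Ea : Ga = g0 / h0 * ha.
  by lcf (mulE (h0^-1) Ka).
have Eb : Gb = g0 / h0 * hb by lcf (mulE (h0^-1) Kb).
have Ec : Gc = g0 / h0 * hc by lcf (mulE (h0^-1) Kc).
have Ed : Gd = g0 / h0 * hd.
  move: N1; rewrite /n1 Ea Eb => N1; lc (addE N1 (mulE (- (g0 / h0)) (center1))).
have Ee : Ge = g0 / h0 * he.
  move: N2; rewrite /n2 Eb Ec => N2; lc (addE N2 (mulE (- (g0 / h0)) (center2))).
do 5 (split => //).
have : g0 = qp Ga Gb Gc Gd Ge Gf x01 x02 by [].
rewrite Ea Eb Ec Ed Ee => Eg.
have Eh : h0 = qp ha hb hc hd he hf x01 x02 by [].
clearbody g0; move: Eg Eh; rewrite /qp => Eg Eh.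
lcf (addE (mulE (-1) Eg) (mulE (g0 / h0) Eh)).
Qed.

End Hyp.
End Alg.

End T3.
Import T3.

Module T6.
Set Implicit Arguments. Unset Strict Implicit.
Local Open Scope ring_scope.

Section Mx.
Variable R : realType.

Lemma det2 (A : 'M[R]_2) : \det A = A 0 0 * A 1 1 - A 0 1 * A 1 0.
Proof.
rewrite (expand_det_row _ 0) !big_ord_recl big_ord0 /cofactor !det_mx11 !mxE /=.
rewrite /bump /=.
have -> : lift 0 (0 : 'I_1) = 1 :> 'I_2 by apply/val_inj.
have -> : lift 1 (0 : 'I_1) = 0 :> 'I_2 by apply/val_inj.
rewrite !addn0 add0n expr0 expr1; ring.
Qed.

Lemma det3 (a b c d e f : R) :
  \det (\matrix_(i < 3, j < 3)
            (nth 0 (nth [::] [:: [:: a; b / 2; d / 2]; [:: b / 2; c; e / 2];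
                              [:: d / 2; e / 2; f]] i) j)) =
  a * (c * f - e / 2 * (e / 2)) - b / 2 * (b / 2 * f - e / 2 * (d / 2))
  + d / 2 * (b / 2 * (e / 2) - c * (d / 2)).
Proof.
rewrite (expand_det_row _ 0) !big_ord_recl big_ord0 /cofactor !det2 !mxE /=.
rewrite /bump /=; ring.
Qed.


Lemma qf2 (A : 'M[R]_2) (w : 'cV[R]_2) :
  (w^T *m A *m w) 0 0 = A 0 0 * w 0 0 ^+ 2 + (A 0 1 + A 1 0) * w 0 0 * w 1 0 + A 1 1 * w 1 0 ^+ 2.
Proof.
rewrite !mxE !big_ord_recl !big_ord0 !mxE !big_ord_recl !big_ord0 !mxE /=.
have -> : lift 0 (0 : 'I_1) = 1 :> 'I_2 by apply/val_inj.
ring.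
Qed.

Definition qf (p q s w1 w2 : R) := p * w1 ^+ 2 + 2 * q * w1 * w2 + s * w2 ^+ 2.

Lemma qf_ge0 p q s w1 w2 : 0 < p -> p * s - q ^+ 2 = 1 -> 0 <= qf p q s w1 w2.
Proof.
move=> Hp Hd.
have E : p * qf p q s w1 w2 = (p * w1 + q * w2) ^+ 2 + w2 ^+ 2.
  rewrite /qf; lc (mulE (w2 ^+ 2) Hd).
have : 0 <= p * qf p q s w1 w2 by rewrite E addr_ge0 // sqr_ge0.
by rewrite pmulr_rge0.
Qed.

Lemma qf_gt0 p q s w1 w2 : 0 < p -> p * s - q ^+ 2 = 1 -> (w1 != 0) || (w2 != 0) ->
  0 < qf p q s w1 w2.
Proof.
move=> Hp Hd Hw.
have E : p * qf p q s w1 w2 = (p * w1 + q * w2) ^+ 2 + w2 ^+ 2.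
  rewrite /qf; lc (mulE (w2 ^+ 2) Hd).
suff : 0 < p * qf p q s w1 w2 by rewrite pmulr_rgt0.
rewrite E.
have [Hw2|Hw2] := eqVneq w2 0.
  move: Hw; rewrite Hw2 eqxx orbF => Hw1.
  by rewrite expr0n /= addr0 mulr0 addr0 exprn_even_gt0 // mulf_neq0 // gt_eqF.
by rewrite ltr_wpDl ?sqr_ge0 // exprn_even_gt0.
Qed.

Lemma ord2 (i : 'I_2) : i = 0 \/ i = 1.
Proof. case: i => [[|[|n]] Hi]; [left|right|by []]; exact: val_inj. Qed.

Lemma ord1' (i : 'I_1) : i = 0.
Proof. case: i => [[|n] Hi]; [exact: val_inj | by []]. Qed.

Lemma sym2 (A : 'M[R]_2) : A^T = A <-> A 0 1 = A 1 0.
Proof.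
split.
  move=> E; have := congr1 (fun M : 'M[R]_2 => M 0 1) E; rewrite mxE; by move=> <-.
move=> E; apply/matrixP => i j; rewrite mxE.
by case: (ord2 i) => ->; case: (ord2 j) => ->.
Qed.

Lemma cV2_eq0 (v : 'cV[R]_2) : v 0 0 = 0 -> v 1 0 = 0 -> v = 0.
Proof.
move=> H0 H1; apply/matrixP => i j; rewrite mxE (ord1' j).
by case: (ord2 i) => ->.
Qed.

Lemma HRparam_iff (A : 'M[R]_2) a : HRparam A a <->
  A 0 1 = A 1 0 /\ 0 < A 0 0 /\ A 0 0 * A 1 1 - A 0 1 ^+ 2 = 1.
Proof.
split.
  move=> [Hs [Hpd Hdet]].
  have Hs' := iffLR (sym2 A) Hs.
  split => //; split.
    have Hv : vec2 1 0 != 0 :> 'cV[R]_2.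
      by apply/negP => /eqP /matrixP /(_ 0 0); rewrite !mxE /= => /eqP; rewrite oner_eq0.
    have := Hpd _ Hv; rewrite qf2 !mxE /=.
    by rewrite expr1n mulr1 !mulr0 expr0n /= mulr0 !addr0.
  by move: Hdet; rewrite det2 Hs' expr2.
move=> [Hs [Hp Hd]]; split; first exact/sym2.
split; last by rewrite det2 -Hs -expr2.
move=> v Hv; rewrite qf2 -Hs.
have -> : A 0 0 * v 0 0 ^+ 2 + (A 0 1 + A 0 1) * v 0 0 * v 1 0 + A 1 1 * v 1 0 ^+ 2
   = qf (A 0 0) (A 0 1) (A 1 1) (v 0 0) (v 1 0) by rewrite /qf; ring.
apply: qf_gt0 => //.
rewrite -negb_and; apply/negP => /andP [/eqP H0 /eqP H1].
by move/negP: Hv; apply; apply/eqP; apply: cV2_eq0.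
Qed.

Lemma vec2_sub x y (a : 'cV[R]_2) : (vec2 x y - a) 0 0 = x - a 0 0 /\ (vec2 x y - a) 1 0 = y - a 1 0.
Proof. by rewrite !mxE. Qed.

Lemma HRcone_iff (A : 'M[R]_2) a x y z : A 0 1 = A 1 0 ->
  (HRcone A a (x, y, z) <-> z ^+ 2 = qf (A 0 0) (A 0 1) (A 1 1) (x - a 0 0) (y - a 1 0)).
Proof.
move=> Hs; rewrite /HRcone qf2 -Hs.
have [-> ->] := vec2_sub x y a.
suff -> : A 0 0 * (x - a 0 0) ^+ 2 + (A 0 1 + A 0 1) * (x - a 0 0) * (y - a 1 0) +
    A 1 1 * (y - a 1 0) ^+ 2 = qf (A 0 0) (A 0 1) (A 1 1) (x - a 0 0) (y - a 1 0) by [].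
by rewrite /qf; ring.
Qed.

End Mx.

End T6.
Import T6.

Module T9.
Set Implicit Arguments. Unset Strict Implicit.
Local Open Scope ring_scope.

Section Ent.
Variable R : realType.
Variables ha hb hc hd he hf : R.
Hypothesis Hdisc : 0 < hb ^+ 2 - 4 * ha * hc.
Hypothesis Hh0 : h0 ha hb hc hd he hf != 0.

Local Notation del := (del ha hb hc).
Local Notation x01 := (x01 ha hb hc hd he).
Local Notation x02 := (x02 ha hb hc hd he).
Local Notation h0 := (h0 ha hb hc hd he hf).
Local Notation center1 := (center1 hd he Hdisc).
Local Notation center2 := (center2 hd he Hdisc).

Definition cGa (p1 q1 s1 a1 a2 p2 q2 s2 b1 b2 : R) := p1 - p2.
Definition cGb (p1 q1 s1 a1 a2 p2 q2 s2 b1 b2 : R) := 2 * (q1 - q2).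
Definition cGc (p1 q1 s1 a1 a2 p2 q2 s2 b1 b2 : R) := s1 - s2.
Definition cGd (p1 q1 s1 a1 a2 p2 q2 s2 b1 b2 : R) := - 2 * (p1 * a1 + q1 * a2) + 2 * (p2 * b1 + q2 * b2).
Definition cGe (p1 q1 s1 a1 a2 p2 q2 s2 b1 b2 : R) := - 2 * (q1 * a1 + s1 * a2) + 2 * (q2 * b1 + s2 * b2).
Definition cGf (p1 q1 s1 a1 a2 p2 q2 s2 b1 b2 : R) := qf p1 q1 s1 a1 a2 - qf p2 q2 s2 b1 b2.

Definition good (p1 q1 s1 a1 a2 p2 q2 s2 b1 b2 : R) : Prop :=
  0 < p1 /\ p1 * s1 - q1 ^+ 2 = 1 /\ 0 < p2 /\ p2 * s2 - q2 ^+ 2 = 1 /\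
  exists l, l != 0 /\
    cGa p1 q1 s1 a1 a2 p2 q2 s2 b1 b2 = l * ha /\
    cGb p1 q1 s1 a1 a2 p2 q2 s2 b1 b2 = l * hb /\
    cGc p1 q1 s1 a1 a2 p2 q2 s2 b1 b2 = l * hc /\
    cGd p1 q1 s1 a1 a2 p2 q2 s2 b1 b2 = l * hd /\
    cGe p1 q1 s1 a1 a2 p2 q2 s2 b1 b2 = l * he /\
    cGf p1 q1 s1 a1 a2 p2 q2 s2 b1 b2 = l * hf.

Lemma gpoly_id p1 q1 s1 a1 a2 p2 q2 s2 b1 b2 x y :
  qf p1 q1 s1 (x - a1) (y - a2) - qf p2 q2 s2 (x - b1) (y - b2) =
  qp (cGa p1 q1 s1 a1 a2 p2 q2 s2 b1 b2) (cGb p1 q1 s1 a1 a2 p2 q2 s2 b1 b2)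
     (cGc p1 q1 s1 a1 a2 p2 q2 s2 b1 b2) (cGd p1 q1 s1 a1 a2 p2 q2 s2 b1 b2)
     (cGe p1 q1 s1 a1 a2 p2 q2 s2 b1 b2) (cGf p1 q1 s1 a1 a2 p2 q2 s2 b1 b2) x y.
Proof. rewrite /cGa /cGb /cGc /cGd /cGe /cGf /qf /qp; ring. Qed.

Definition nf_s1 (p q : R) := (1 + q ^+ 2) / p.
Definition tt (p q s : R) := p * hc + s * ha - q * hb.
Definition nf_l (p q : R) := tt p q (nf_s1 p q) / del.
Definition nf_p2 (p q : R) := p - nf_l p q * ha.
Definition nf_q2 (p q : R) := q - nf_l p q * hb / 2.
Definition nf_s2 (p q : R) := nf_s1 p q - nf_l p q * hc.
Definition nf_a1 (p q u1 u2 : R) := x01 + nf_s1 p q * u1 - q * u2.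
Definition nf_a2 (p q u1 u2 : R) := x02 - q * u1 + p * u2.
Definition nf_b1 (p q u1 u2 : R) := x01 + nf_s2 p q * u1 - nf_q2 p q * u2.
Definition nf_b2 (p q u1 u2 : R) := x02 - nf_q2 p q * u1 + nf_p2 p q * u2.
Definition uu1 (p q a1 a2 : R) := p * (a1 - x01) + q * (a2 - x02).
Definition uu2 (q s a1 a2 : R) := q * (a1 - x01) + s * (a2 - x02).
Definition Kq (u1 u2 : R) := hc * u1 ^+ 2 - hb * u1 * u2 + ha * u2 ^+ 2 - h0.
Definition TT (p q : R) := hc * p ^+ 2 + ha * (1 + q ^+ 2) - hb * p * q.

Lemma good_nf p1 q1 s1 a1 a2 p2 q2 s2 b1 b2 :
  good p1 q1 s1 a1 a2 p2 q2 s2 b1 b2 ->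
  let u1 := uu1 p1 q1 a1 a2 in let u2 := uu2 q1 s1 a1 a2 in
  [/\ s1 = nf_s1 p1 q1, p2 = nf_p2 p1 q1, q2 = nf_q2 p1 q1, s2 = nf_s2 p1 q1 &
   [/\ a1 = nf_a1 p1 q1 u1 u2, a2 = nf_a2 p1 q1 u1 u2, b1 = nf_b1 p1 q1 u1 u2,
       b2 = nf_b2 p1 q1 u1 u2 & Kq u1 u2 = 0 /\ TT p1 q1 != 0]].
Proof.
move=> [Hp1 [dA [Hp2 [dB [l [Hl [Ea [Eb [Ec [Ed [Ee Ef]]]]]]]]]]] u1 u2.
move: Ea Eb Ec Ed Ee Ef; rewrite /cGa /cGb /cGc /cGd /cGe /cGf => Ea Eb Ec Ed Ee Ef.
have Ep2 : p2 = p1 - l * ha by lc (mulE (-1) Ea).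
have Eq2 : q2 = q1 - l * hb / 2 by lcf (mulE (-1/2) Eb).
have Es2 : s2 = s1 - l * hc by lc (mulE (-1) Ec).
have Es1 : s1 = nf_s1 p1 q1 by rewrite /nf_s1; lcf (mulE (1 / p1) dA); rewrite gt_eqF.
have Hlt : l * del = tt p1 q1 s1.
  apply/eqP; rewrite -subr_eq0; apply/eqP; apply: (mul0_l Hl).
  move: dB; rewrite Ep2 Eq2 Es2 => dB.
  rewrite /tt /T3.del; lcf (addE dB (mulE (-1) dA)).
have Hdel := del_neq0 Hdisc.
have Hl2 : l = nf_l p1 q1 by rewrite /nf_l -Es1 -Hlt mulfK.
have Ea1 : a1 = x01 + s1 * u1 - q1 * u2.
  rewrite /u1 /u2 /uu1 /uu2; lc (mulE (-(a1 - x01)) dA).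
have Ea2 : a2 = x02 - q1 * u1 + p1 * u2.
  rewrite /u1 /u2 /uu1 /uu2; lc (mulE (-(a2 - x02)) dA).
have Bu1 : p2 * (b1 - x01) + q2 * (b2 - x02) = u1.
  rewrite /u1 /uu1; lcf (addE (addE (mulE (1/2) Ed) (mulE (l/2) center1))
                        (addE (mulE (-x01) Ep2) (mulE (-x02) Eq2))).
have Bu2 : q2 * (b1 - x01) + s2 * (b2 - x02) = u2.
  rewrite /u2 /uu2; lcf (addE (addE (mulE (1/2) Ee) (mulE (l/2) center2))
                        (addE (mulE (-x01) Eq2) (mulE (-x02) Es2))).
clearbody u1 u2.
have Eb1 : b1 = x01 + s2 * u1 - q2 * u2.
  lc (addE (addE (mulE (-(b1 - x01)) dB) (mulE s2 Bu1)) (mulE (-q2) Bu2)).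
have Eb2 : b2 = x02 - q2 * u1 + p2 * u2.
  lc (addE (addE (mulE (-(b2 - x02)) dB) (mulE (-q2) Bu1)) (mulE p2 Bu2)).
have HTT : TT p1 q1 != 0.
  have -> : TT p1 q1 = p1 * tt p1 q1 s1 by rewrite /TT /tt; lc (mulE (-ha) dA).
  by rewrite -Hlt !mulf_neq0 // gt_eqF.
have HKq : Kq u1 u2 = 0.
  apply: (mul0_l Hl).
  move: Ef dB; rewrite Ea1 Ea2 Eb1 Eb2 Ep2 Eq2 Es2 => Ef dB'.
  rewrite /Kq /T3.h0 /qp; move: Ef; rewrite /qf => Ef.
  lcf (addE (addE Ef (mulE (-((s1 * u1 ^+ 2 - 2 * q1 * u1 * u2 + p1 * u2 ^+ 2) + 2 * (x01 * u1 + x02 * u2))) dA))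
     (addE (mulE (((s1 - l * hc) * u1 ^+ 2 - 2 * (q1 - l * hb / 2) * u1 * u2 + (p1 - l * ha) * u2 ^+ 2) + 2 * (x01 * u1 + x02 * u2)) dB')
        (addE (mulE (- l * x01) center1) (mulE (- l * x02) center2)))).
split => //.
- by rewrite Ep2 /nf_p2 -Hl2.
- by rewrite Eq2 /nf_q2 -Hl2.
- by rewrite Es2 /nf_s2 -Hl2 -Es1.
split => //.
- by rewrite /nf_a1 -Es1.
- by rewrite /nf_b1 /nf_s2 /nf_q2 -Hl2 -Es1 -Es2 -Eq2.
- by rewrite /nf_b2 /nf_p2 /nf_q2 -Hl2 -Ep2 -Eq2.
Qed.

End Ent.

End T9.
Import T9.

Module T11.
Set Implicit Arguments. Unset Strict Implicit.
Local Open Scope ring_scope.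

Section L.
Variable R : realType.
Lemma lorentz (p1 q1 s1 p2 q2 s2 : R) : 0 < p1 -> p1 * s1 - q1 ^+ 2 = 1 ->
  p2 * s2 - q2 ^+ 2 = 1 -> 0 < p1 * s2 + s1 * p2 - 2 * q1 * q2 -> 0 < p2.
Proof.
move=> Hp1 dA dB Hpol.
case: (ltP 0 p2) => // Hp2.
have Hp2' : p2 < 0.
  rewrite lt_neqAle Hp2 andbT; apply/eqP => E; move: dB; rewrite E mul0r sub0r.
  move=> E2; have : 0 <= q2 ^+ 2 by rewrite sqr_ge0.
  by rewrite -oppr_le0 E2 ler10.
have Hs2 : s2 < 0 by nra.
have Hs1 : 0 < s1 by nra.
set X := - (p1 * s2 + s1 * p2).
have HX : 0 < X by rewrite /X; nra.
have HX2 : X ^+ 2 = (p1 * s2 - s1 * p2) ^+ 2 + 4 * (1 + q1 ^+ 2) * (1 + q2 ^+ 2).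
  rewrite /X; lc (addE (mulE (4 * (p2 * s2)) dA) (mulE (4 * (1 + q1 ^+ 2)) dB)).
have H4 : 4 * (q1 * q2) ^+ 2 < X ^+ 2.
  rewrite HX2 exprMn.
  have := sqr_ge0 (p1 * s2 - s1 * p2); have := sqr_ge0 q1; have := sqr_ge0 q2.
  set A := q1 ^+ 2; set B := q2 ^+ 2; set C := (_ - _) ^+ 2.
  nra.
have : X < - 2 * q1 * q2 by rewrite /X; lra.
nra.
Qed.
End L.

Section C.
Variable R : realType.
Variables ha hb hc hd he hf : R.
Hypothesis Hdisc : 0 < hb ^+ 2 - 4 * ha * hc.

Local Notation del := (del ha hb hc).
Local Notation x01 := (x01 ha hb hc hd he).
Local Notation x02 := (x02 ha hb hc hd he).
Local Notation h0 := (h0 ha hb hc hd he hf).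
Local Notation center1 := (center1 hd he Hdisc).
Local Notation center2 := (center2 hd he Hdisc).

Lemma nf_good p q u1 u2 : 0 < p -> TT ha hb hc p q != 0 -> Kq ha hb hc hd he hf u1 u2 = 0 ->
  let s1 := nf_s1 p q in
  let a1 := nf_a1 ha hb hc hd he p q u1 u2 in let a2 := nf_a2 ha hb hc hd he p q u1 u2 in
  good ha hb hc hd he hf p q s1 a1 a2 (nf_p2 ha hb hc p q) (nf_q2 ha hb hc p q)
     (nf_s2 ha hb hc p q) (nf_b1 ha hb hc hd he p q u1 u2) (nf_b2 ha hb hc hd he p q u1 u2)
  /\ uu1 ha hb hc hd he p q a1 a2 = u1 /\ uu2 ha hb hc hd he q s1 a1 a2 = u2.
Proof.
move=> Hp HTT HKq s1 a1 a2.
have Hdel := del_neq0 Hdisc.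
have dA : p * s1 - q ^+ 2 = 1 by rewrite /s1 /nf_s1; field; rewrite gt_eqF.
rewrite /a1 /a2 {a1 a2}.
rewrite /nf_a1 /nf_a2 /nf_b1 /nf_b2 /nf_p2 /nf_q2 /nf_s2 -/s1.
have Htt : tt ha hb hc p q s1 != 0.
  apply/eqP => E; move/eqP: HTT; apply.
  have -> : TT ha hb hc p q = p * tt ha hb hc p q s1 by rewrite /TT /tt; lc (mulE (-ha) dA).
  by rewrite E mulr0.
have Hlt : nf_l ha hb hc p q * del = tt ha hb hc p q s1.
  by rewrite /nf_l -/s1 divfK.
set l := nf_l ha hb hc p q in Hlt *.
have Hl : l != 0 by apply/eqP => E; move: Hlt; rewrite E mul0r => E2; move/eqP: Htt; rewrite -E2.
clearbody l s1.
have dB : (p - l * ha) * (s1 - l * hc) - (q - l * hb / 2) ^+ 2 = 1.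
  move: Hlt; rewrite /tt /T3.del => Hlt; lcf (addE dA (mulE l Hlt)).
have Hp2 : 0 < p - l * ha.
  apply: (lorentz Hp dA dB).
  have -> : p * (s1 - l * hc) + s1 * (p - l * ha) - 2 * q * (q - l * hb / 2) = 2 - l ^+ 2 * del.
    move: Hlt; rewrite /tt => Hlt; lcf (addE (mulE 2 dA) (mulE l Hlt)).
  have := del_lt0 Hdisc; have := sqr_ge0 l; nra.
split; last first.
  by split; rewrite /uu1 /uu2; [lc (mulE u1 dA) | lc (mulE u2 dA)].
do 4 (split => //).
exists l; split => //.
rewrite /cGa /cGb /cGc /cGd /cGe /cGf.
split; first by ring.
split; first by field.
split; first by ring.
split.
  lcf (addE (addE (mulE (2 * u1) dB) (mulE (-2 * u1) dA)) (mulE (-l) center1)).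
split.
  lcf (addE (addE (mulE (2 * u2) dB) (mulE (-2 * u2) dA)) (mulE (-l) center2)).
move: HKq; rewrite /Kq /T3.h0 /qp /qf => HKq.
lcf (addE (addE (mulE ((s1 * u1 ^+ 2 - 2 * q * u1 * u2 + p * u2 ^+ 2) + 2 * (x01 * u1 + x02 * u2)) dA)
     (mulE (-(((s1 - l * hc) * u1 ^+ 2 - 2 * (q - l * hb / 2) * u1 * u2 + (p - l * ha) * u2 ^+ 2) + 2 * (x01 * u1 + x02 * u2))) dB))
     (addE (mulE l HKq) (addE (mulE (l * x01) center1) (mulE (l * x02) center2)))).
Qed.
End C.

End T11.
Import T11.

Module T12.
Set Implicit Arguments. Unset Strict Implicit.
Local Open Scope ring_scope.

Section Main.
Variable R : realType.
Variables ha hb hc hd he hf : R.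
Hypothesis Hdisc : 0 < hb ^+ 2 - 4 * ha * hc.
Hypothesis Hh0 : h0 ha hb hc hd he hf != 0.
Variable H : R * R -> Prop.
Hypothesis HH : forall p : R * R, H p <-> qp ha hb hc hd he hf p.1 p.2 = 0.

Local Notation good := (good ha hb hc hd he hf).

Definition ent (P : cone_param R * cone_param R) :=
  (P.1.1 0 0, P.1.1 0 1, P.1.1 1 1, P.1.2 0 0, P.1.2 1 0,
   P.2.1 0 0, P.2.1 0 1, P.2.1 1 1, P.2.2 0 0, P.2.2 1 0).

Definition goodP (P : cone_param R * cone_param R) :=
  good (P.1.1 0 0) (P.1.1 0 1) (P.1.1 1 1) (P.1.2 0 0) (P.1.2 1 0)
       (P.2.1 0 0) (P.2.1 0 1) (P.2.1 1 1) (P.2.2 0 0) (P.2.2 1 0).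

Lemma proj_iff (A B : 'M[R]_2) a b x y :
  A 0 1 = A 1 0 -> 0 < A 0 0 -> A 0 0 * A 1 1 - A 0 1 ^+ 2 = 1 ->
  B 0 1 = B 1 0 ->
  (proj_inter (A, a) (B, b) (x, y) <->
   qf (A 0 0) (A 0 1) (A 1 1) (x - a 0 0) (y - a 1 0) =
   qf (B 0 0) (B 0 1) (B 1 1) (x - b 0 0) (y - b 1 0)).
Proof.
move=> sA pA dA sB; split.
  move=> [z [/= H1 H2]].
  move/(HRcone_iff _ _ _ _ sA): H1 => <-.
  by move/(HRcone_iff _ _ _ _ sB): H2 => <-.
move=> E.
have HA0 : 0 <= qf (A 0 0) (A 0 1) (A 1 1) (x - a 0 0) (y - a 1 0) by apply: qf_ge0.
exists (Num.sqrt (qf (A 0 0) (A 0 1) (A 1 1) (x - a 0 0) (y - a 1 0))); split => /=.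
  by apply/(HRcone_iff _ _ _ _ sA); rewrite sqr_sqrtr.
by apply/(HRcone_iff _ _ _ _ sB); rewrite sqr_sqrtr // E.
Qed.

Lemma subr0_iff (a b : R) : a - b = 0 <-> a = b.
Proof. by split => [/eqP|->]; [rewrite subr_eq0 => /eqP | rewrite subrr]. Qed.

Lemma D_iff P : cone_pairs_over H P <->
  P.1.1 0 1 = P.1.1 1 0 /\ P.2.1 0 1 = P.2.1 1 0 /\ goodP P.
Proof.
case: P => [[A a] [B b]] /=; rewrite /cone_pairs_over /goodP /=.
split.
  move=> [/HRparam_iff [sA [pA dA]] [/HRparam_iff [sB [pB dB]] HZ]].
  do 2 (split => //).
  do 4 (split => //).
  apply: (Klem Hdisc Hh0) => x y.
  rewrite -gpoly_id subr0_iff -(proj_iff _ _ _ _ sA pA dA sB).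
  by rewrite HZ HH.
move=> [sA [sB [pA [dA [pB [dB [l [Hl Hc]]]]]]]].
split; first by apply/HRparam_iff.
split; first by apply/HRparam_iff.
move=> [x y]; rewrite (proj_iff _ _ _ _ sA pA dA sB) HH /= -subr0_iff gpoly_id.
move: Hc => [-> [-> [-> [-> [-> ->]]]]].
have -> : qp (l * ha) (l * hb) (l * hc) (l * hd) (l * he) (l * hf) x y =
   l * qp ha hb hc hd he hf x y by rewrite /qp; ring.
split; first by move/eqP; rewrite mulf_eq0 (negbTE Hl) => /eqP.
by move=> ->; rewrite mulr0.
Qed.


Definition pv n (i : 'I_n) : pexpr R n := PVar R i.
Definition pc n (r : R) : pexpr R n := PConst n r.
Definition psub n (a b : pexpr R n) := PAdd a (POpp b).
Definition pqf n (p q s w1 w2 : pexpr R n) :=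
  PAdd (PAdd (PMul p (PMul w1 w1)) (PMul (PMul (PMul (pc n 2) q) w1) w2)) (PMul s (PMul w2 w2)).
Lemma pqfE n (p q s w1 w2 : pexpr R n) x : peval (pqf p q s w1 w2) x =
  qf (peval p x) (peval q x) (peval s x) (peval w1 x) (peval w2 x).
Proof. by rewrite /= /qf !expr2; ring. Qed.

Section PE.
Variable n : nat.
Variables p1 q1 s1 a1 a2 p2 q2 s2 b1 b2 : pexpr R n.
Definition pGa := psub p1 p2.
Definition pGb := PMul (pc n 2) (psub q1 q2).
Definition pGc := psub s1 s2.
Definition pGd := PAdd (PMul (pc n (-2)) (PAdd (PMul p1 a1) (PMul q1 a2)))
                       (PMul (pc n 2) (PAdd (PMul p2 b1) (PMul q2 b2))).
Definition pGe := PAdd (PMul (pc n (-2)) (PAdd (PMul q1 a1) (PMul s1 a2)))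
                       (PMul (pc n 2) (PAdd (PMul q2 b1) (PMul s2 b2))).
Definition pGf := psub (pqf p1 q1 s1 a1 a2) (pqf p2 q2 s2 b1 b2).
Definition pIP := PAdd (PAdd (PAdd (PAdd (PAdd (PMul pGa (pc n ha)) (PMul pGb (pc n hb)))
   (PMul pGc (pc n hc))) (PMul pGd (pc n hd))) (PMul pGe (pc n he))) (PMul pGf (pc n hf)).
End PE.

Definition IP (Ga Gb Gc Gd Ge Gf : R) :=
  Ga * ha + Gb * hb + Gc * hc + Gd * hd + Ge * he + Gf * hf.
Definition Hn := ha * ha + hb * hb + hc * hc + hd * hd + he * he + hf * hf.

Arguments pqf : simpl never.
Arguments pGf : simpl never.
Section PEE.
Variable n : nat.
Variables p1 q1 s1 a1 a2 p2 q2 s2 b1 b2 : pexpr R n.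
Variable x : 'I_n -> R.
Local Notation E p := (peval p x).
Lemma pGaE : E (pGa p1 p2) = cGa (E p1) (E q1) (E s1) (E a1) (E a2) (E p2) (E q2) (E s2) (E b1) (E b2).
Proof. by []. Qed.
Lemma pGbE : E (pGb q1 q2) = cGb (E p1) (E q1) (E s1) (E a1) (E a2) (E p2) (E q2) (E s2) (E b1) (E b2).
Proof. by []. Qed.
Lemma pGcE : E (pGc s1 s2) = cGc (E p1) (E q1) (E s1) (E a1) (E a2) (E p2) (E q2) (E s2) (E b1) (E b2).
Proof. by []. Qed.
Lemma pGdE : E (pGd p1 q1 a1 a2 p2 q2 b1 b2) = cGd (E p1) (E q1) (E s1) (E a1) (E a2) (E p2) (E q2) (E s2) (E b1) (E b2).
Proof. by rewrite /= /cGd. Qed.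
Lemma pGeE : E (pGe q1 s1 a1 a2 q2 s2 b1 b2) = cGe (E p1) (E q1) (E s1) (E a1) (E a2) (E p2) (E q2) (E s2) (E b1) (E b2).
Proof. by rewrite /= /cGe. Qed.
Lemma pGfE : E (pGf p1 q1 s1 a1 a2 p2 q2 s2 b1 b2) = cGf (E p1) (E q1) (E s1) (E a1) (E a2) (E p2) (E q2) (E s2) (E b1) (E b2).
Proof. by rewrite /pGf /psub /= /cGf /qf !expr2. Qed.
Lemma pIPE : E (pIP p1 q1 s1 a1 a2 p2 q2 s2 b1 b2) =
  IP (cGa (E p1) (E q1) (E s1) (E a1) (E a2) (E p2) (E q2) (E s2) (E b1) (E b2))
     (cGb (E p1) (E q1) (E s1) (E a1) (E a2) (E p2) (E q2) (E s2) (E b1) (E b2))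
     (cGc (E p1) (E q1) (E s1) (E a1) (E a2) (E p2) (E q2) (E s2) (E b1) (E b2))
     (cGd (E p1) (E q1) (E s1) (E a1) (E a2) (E p2) (E q2) (E s2) (E b1) (E b2))
     (cGe (E p1) (E q1) (E s1) (E a1) (E a2) (E p2) (E q2) (E s2) (E b1) (E b2))
     (cGf (E p1) (E q1) (E s1) (E a1) (E a2) (E p2) (E q2) (E s2) (E b1) (E b2)).
Proof.
by rewrite /pIP /= /IP /cGa /cGb /cGc /cGd /cGe /cGf /qf !expr2.
Qed.
End PEE.

Local Notation x01 := (x01 ha hb hc hd he).
Local Notation x02 := (x02 ha hb hc hd he).
Local Notation uu1 := (uu1 ha hb hc hd he).
Local Notation uu2 := (uu2 ha hb hc hd he).
Local Notation TT := (TT ha hb hc).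
Local Notation Kq := (Kq ha hb hc hd he hf).

Definition puu1 n (p q a1 a2 : pexpr R n) := PAdd (PMul p (psub a1 (pc n x01))) (PMul q (psub a2 (pc n x02))).
Definition puu2 n (q s a1 a2 : pexpr R n) := PAdd (PMul q (psub a1 (pc n x01))) (PMul s (psub a2 (pc n x02))).
Definition pTT n (p q : pexpr R n) :=
  psub (PAdd (PMul (pc n hc) (PMul p p)) (PMul (pc n ha) (PAdd (pc n 1) (PMul q q)))) (PMul (PMul (pc n hb) p) q).
Definition pKq n (u1 u2 : pexpr R n) :=
  psub (PAdd (psub (PMul (pc n hc) (PMul u1 u1)) (PMul (PMul (pc n hb) u1) u2)) (PMul (pc n ha) (PMul u2 u2)))
       (pc n (h0 ha hb hc hd he hf)).

Lemma puu1E n (p q a1 a2 : pexpr R n) x : peval (puu1 p q a1 a2) x = uu1 (peval p x) (peval q x) (peval a1 x) (peval a2 x).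
Proof. by []. Qed.
Lemma puu2E n (q s a1 a2 : pexpr R n) x : peval (puu2 q s a1 a2) x = uu2 (peval q x) (peval s x) (peval a1 x) (peval a2 x).
Proof. by []. Qed.
Lemma pTTE n (p q : pexpr R n) x : peval (pTT p q) x = TT (peval p x) (peval q x).
Proof. by rewrite /= /T9.TT !expr2 !mulrA. Qed.
Lemma pKqE n (p q : pexpr R n) x : peval (pKq p q) x = Kq (peval p x) (peval q x).
Proof. by rewrite /= /T9.Kq !expr2 !mulrA. Qed.

Lemma Hn_neq0 : Hn != 0.
Proof.
apply/eqP => E.
have : 0 < 2 * Hn.
  have -> : 2 * Hn = (hb ^+ 2 - 4 * ha * hc) + (2 * (ha + hc) ^+ 2 + hb ^+ 2 + 2 * hd ^+ 2 + 2 * he ^+ 2 + 2 * hf ^+ 2).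
    by rewrite /Hn; ring.
  have := sqr_ge0 (ha + hc); have := sqr_ge0 hd; have := sqr_ge0 he; have := sqr_ge0 hf.
  have := sqr_ge0 hb.
  move: Hdisc; set D := hb ^+ 2 - 4 * ha * hc.
  set X1 := (ha + hc) ^+ 2; set X2 := hd ^+ 2; set X3 := he ^+ 2; set X4 := hf ^+ 2; set X5 := hb ^+ 2.
  lra.
by rewrite E mulr0 ltxx.
Qed.

Lemma prop_iff (Ga Gb Gc Gd Ge Gf : R) :
  (exists l, l != 0 /\ Ga = l * ha /\ Gb = l * hb /\ Gc = l * hc /\
            Gd = l * hd /\ Ge = l * he /\ Gf = l * hf) <->
  (~ (IP Ga Gb Gc Gd Ge Gf = 0) /\
   Ga * Hn - IP Ga Gb Gc Gd Ge Gf * ha = 0 /\ Gb * Hn - IP Ga Gb Gc Gd Ge Gf * hb = 0 /\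
   Gc * Hn - IP Ga Gb Gc Gd Ge Gf * hc = 0 /\ Gd * Hn - IP Ga Gb Gc Gd Ge Gf * hd = 0 /\
   Ge * Hn - IP Ga Gb Gc Gd Ge Gf * he = 0 /\ Gf * Hn - IP Ga Gb Gc Gd Ge Gf * hf = 0).
Proof.
have HnZ := Hn_neq0.
split.
  move=> [l [Hl [-> [-> [-> [-> [-> ->]]]]]]].
  have EI : IP (l * ha) (l * hb) (l * hc) (l * hd) (l * he) (l * hf) = l * Hn.
    by rewrite /IP /Hn; ring.
  rewrite EI; split.
    by move/eqP; rewrite mulf_eq0 (negbTE Hl) (negbTE HnZ).
  by do 5 (split; first ring); ring.
move=> [HI [Ea [Eb [Ec [Ed [Ee Ef]]]]]].
exists (IP Ga Gb Gc Gd Ge Gf / Hn); split.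
  by rewrite mulf_neq0 ?invr_eq0 //; apply/eqP.
split; first by lcf (mulE (Hn^-1) Ea).
split; first by lcf (mulE (Hn^-1) Eb).
split; first by lcf (mulE (Hn^-1) Ec).
split; first by lcf (mulE (Hn^-1) Ed).
split; first by lcf (mulE (Hn^-1) Ee).
by lcf (mulE (Hn^-1) Ef).
Qed.

End Main.

End T12.
Import T12.

Module T13.
Set Implicit Arguments. Unset Strict Implicit.
Local Open Scope ring_scope.

Section Fin.
Variable R : realType.

Definition mx2 (p q s : R) : 'M[R]_2 :=
  \matrix_(i < 2, j < 2) nth 0 (nth [::] [:: [:: p; q]; [:: q; s]] i) j.
Definition mkP (e0 e1 e2 e3 e4 e5 e6 e7 e8 e9 : R) : cone_param R * cone_param R :=
  ((mx2 e0 e1 e2, vec2 e3 e4), (mx2 e5 e6 e7, vec2 e8 e9)).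

Lemma mx2E p q s : [/\ mx2 p q s 0 0 = p, mx2 p q s 0 1 = q, mx2 p q s 1 0 = q & mx2 p q s 1 1 = s].
Proof. by rewrite !mxE. Qed.
Lemma vec2E (x y : R) : (vec2 x y) 0 0 = x /\ (vec2 x y) 1 0 = y.
Proof. by rewrite !mxE. Qed.

Lemma mx2_eq (A : 'M[R]_2) : A 0 1 = A 1 0 -> A = mx2 (A 0 0) (A 0 1) (A 1 1).
Proof.
move=> E; apply/matrixP => i j; rewrite mxE.
by case: (ord2 i) => ->; case: (ord2 j) => ->.
Qed.
Lemma vec2_eq (a : 'cV[R]_2) : a = vec2 (a 0 0) (a 1 0).
Proof.
apply/matrixP => i j; rewrite mxE (ord1' j).
by case: (ord2 i) => ->.
Qed.

Lemma mkP_ent (P : cone_param R * cone_param R) : P.1.1 0 1 = P.1.1 1 0 -> P.2.1 0 1 = P.2.1 1 0 ->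
  P = mkP (P.1.1 0 0) (P.1.1 0 1) (P.1.1 1 1) (P.1.2 0 0) (P.1.2 1 0)
          (P.2.1 0 0) (P.2.1 0 1) (P.2.1 1 1) (P.2.2 0 0) (P.2.2 1 0).
Proof.
case: P => [[A a] [B b]] /= sA sB.
by rewrite /mkP -(mx2_eq sA) -(mx2_eq sB) -!vec2_eq.
Qed.

Lemma ord4 (i : 'I_4) : i = inord 0 \/ i = inord 1 \/ i = inord 2 \/ i = inord 3.
Proof.
case: i => [[|[|[|[|k]]]] Hk] //.
- by left; apply/val_inj; rewrite /= inordK.
- by right; left; apply/val_inj; rewrite /= inordK.
- by right; right; left; apply/val_inj; rewrite /= inordK.
- by right; right; right; apply/val_inj; rewrite /= inordK.
Qed.

Variables ha hb hc hd he hf : R.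
Hypothesis Hdisc : 0 < hb ^+ 2 - 4 * ha * hc.
Hypothesis Hh0 : h0 ha hb hc hd he hf != 0.
Variable H : R * R -> Prop.
Hypothesis HH : forall p : R * R, H p <-> qp ha hb hc hd he hf p.1 p.2 = 0.

Local Notation x01 := (x01 ha hb hc hd he).
Local Notation x02 := (x02 ha hb hc hd he).
Local Notation uu1 := (uu1 ha hb hc hd he).
Local Notation uu2 := (uu2 ha hb hc hd he).
Local Notation TT := (TT ha hb hc).
Local Notation Kq := (Kq ha hb hc hd he hf).
Local Notation good := (good ha hb hc hd he hf).
Local Notation goodP := (goodP ha hb hc hd he hf).
Local Notation D := (cone_pairs_over H).

Definition Phi (P : cone_param R * cone_param R) : 'I_4 -> R := fun i =>
  [:: P.1.1 0 0; P.1.1 0 1; uu1 (P.1.1 0 0) (P.1.1 0 1) (P.1.2 0 0) (P.1.2 1 0);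
      uu2 (P.1.1 0 1) (P.1.1 1 1) (P.1.2 0 0) (P.1.2 1 0)]`_i.

Definition FS : sformula R 4 :=
  SAnd (SPos (pv R (inord 0)))
   (SAnd (SNot (SZero (pTT ha hb hc (pv R (inord 0)) (pv R (inord 1)))))
         (SZero (pKq ha hb hc hd he hf (pv R (inord 2)) (pv R (inord 3))))).
Definition S (s : 'I_4 -> R) := sholds FS s.

Lemma S_iff s : S s <-> 0 < s (inord 0) /\ TT (s (inord 0)) (s (inord 1)) != 0 /\
                        Kq (s (inord 2)) (s (inord 3)) = 0.
Proof.
have -> : S s = (0 < s (inord 0) /\ ~ (peval (pTT ha hb hc (pv R (inord 0)) (pv R (inord 1))) s = 0) /\
   peval (pKq ha hb hc hd he hf (pv R (inord 2)) (pv R (inord 3))) s = 0) by [].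
rewrite pTTE pKqE /=.
split => [[H1 [H2 H3]] | [H1 [/eqP H2 H3]]]; do ! split => //.
by apply/eqP.
Qed.

Lemma D_good P : D P -> P.1.1 0 1 = P.1.1 1 0 /\ P.2.1 0 1 = P.2.1 1 0 /\ goodP P.
Proof. exact: (iffLR (D_iff Hdisc Hh0 HH P)). Qed.

Lemma PhiS P : D P -> S (Phi P).
Proof.
move=> /D_good [_ [_ G]].
have [_ _ _ _ [_ _ _ _ [HK HT]]] := good_nf Hdisc G.
have [Hp _] := G.
by apply/S_iff; rewrite /Phi !inordK.
Qed.

Definition mkNF (p q u1 u2 : R) :=
  mkP p q (nf_s1 p q) (nf_a1 ha hb hc hd he p q u1 u2) (nf_a2 ha hb hc hd he p q u1 u2)
      (nf_p2 ha hb hc p q) (nf_q2 ha hb hc p q) (nf_s2 ha hb hc p q)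
      (nf_b1 ha hb hc hd he p q u1 u2) (nf_b2 ha hb hc hd he p q u1 u2).

Lemma D_nf P : D P -> P = mkNF (Phi P (inord 0)) (Phi P (inord 1)) (Phi P (inord 2)) (Phi P (inord 3)).
Proof.
move=> /D_good [sP1 [sP2 GP]].
have [P1 P2 P3 P4 [P5 P6 P7 P8 _]] := good_nf Hdisc GP.
rewrite /Phi !inordK //=.
rewrite {1}(mkP_ent sP1 sP2) /mkNF.
by f_equal.
Qed.

Lemma Phi_inj P Q : D P -> D Q -> (forall i, Phi P i = Phi Q i) -> P = Q.
Proof.
move=> DP DQ E.
by rewrite (D_nf DP) (D_nf DQ) !E.
Qed.

Lemma Phi_surj s : S s -> exists P, D P /\ forall i, Phi P i = s i.
Proof.
move/S_iff => [Hp [HT HK]].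
have [G [U1 U2]] := nf_good Hdisc Hp HT HK.
exists (mkNF (s (inord 0)) (s (inord 1)) (s (inord 2)) (s (inord 3))).
split.
  apply/(D_iff Hdisc Hh0 HH); rewrite /mkNF /mkP /goodP /=.
  rewrite !mxE /=.
  by do 2 split.
move=> i; rewrite /Phi /mkNF /mkP /=.
rewrite !mxE /= U1 U2.
by case: (ord4 i) => [->|[->|[->|->]]]; rewrite inordK.
Qed.

Definition qGa n (p1 q1 s1 a1 a2 p2 q2 s2 b1 b2 : pexpr R n) := pGa p1 p2.
Lemma qGaE n (p1 q1 s1 a1 a2 p2 q2 s2 b1 b2 : pexpr R n) x : peval (qGa p1 q1 s1 a1 a2 p2 q2 s2 b1 b2) x = cGa (peval p1 x) (peval q1 x) (peval s1 x) (peval a1 x) (peval a2 x) (peval p2 x) (peval q2 x) (peval s2 x) (peval b1 x) (peval b2 x).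
Proof. exact: pGaE. Qed.
Definition qGb n (p1 q1 s1 a1 a2 p2 q2 s2 b1 b2 : pexpr R n) := pGb q1 q2.
Lemma qGbE n (p1 q1 s1 a1 a2 p2 q2 s2 b1 b2 : pexpr R n) x : peval (qGb p1 q1 s1 a1 a2 p2 q2 s2 b1 b2) x = cGb (peval p1 x) (peval q1 x) (peval s1 x) (peval a1 x) (peval a2 x) (peval p2 x) (peval q2 x) (peval s2 x) (peval b1 x) (peval b2 x).
Proof. exact: pGbE. Qed.
Definition qGc n (p1 q1 s1 a1 a2 p2 q2 s2 b1 b2 : pexpr R n) := pGc s1 s2.
Lemma qGcE n (p1 q1 s1 a1 a2 p2 q2 s2 b1 b2 : pexpr R n) x : peval (qGc p1 q1 s1 a1 a2 p2 q2 s2 b1 b2) x = cGc (peval p1 x) (peval q1 x) (peval s1 x) (peval a1 x) (peval a2 x) (peval p2 x) (peval q2 x) (peval s2 x) (peval b1 x) (peval b2 x).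
Proof. exact: pGcE. Qed.
Definition qGd n (p1 q1 s1 a1 a2 p2 q2 s2 b1 b2 : pexpr R n) := pGd p1 q1 a1 a2 p2 q2 b1 b2.
Lemma qGdE n (p1 q1 s1 a1 a2 p2 q2 s2 b1 b2 : pexpr R n) x : peval (qGd p1 q1 s1 a1 a2 p2 q2 s2 b1 b2) x = cGd (peval p1 x) (peval q1 x) (peval s1 x) (peval a1 x) (peval a2 x) (peval p2 x) (peval q2 x) (peval s2 x) (peval b1 x) (peval b2 x).
Proof. exact: pGdE. Qed.
Definition qGe n (p1 q1 s1 a1 a2 p2 q2 s2 b1 b2 : pexpr R n) := pGe q1 s1 a1 a2 q2 s2 b1 b2.
Lemma qGeE n (p1 q1 s1 a1 a2 p2 q2 s2 b1 b2 : pexpr R n) x : peval (qGe p1 q1 s1 a1 a2 p2 q2 s2 b1 b2) x = cGe (peval p1 x) (peval q1 x) (peval s1 x) (peval a1 x) (peval a2 x) (peval p2 x) (peval q2 x) (peval s2 x) (peval b1 x) (peval b2 x).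
Proof. exact: pGeE. Qed.
Definition qGf n (p1 q1 s1 a1 a2 p2 q2 s2 b1 b2 : pexpr R n) := pGf p1 q1 s1 a1 a2 p2 q2 s2 b1 b2.
Lemma qGfE n (p1 q1 s1 a1 a2 p2 q2 s2 b1 b2 : pexpr R n) x : peval (qGf p1 q1 s1 a1 a2 p2 q2 s2 b1 b2) x = cGf (peval p1 x) (peval q1 x) (peval s1 x) (peval a1 x) (peval a2 x) (peval p2 x) (peval q2 x) (peval s2 x) (peval b1 x) (peval b2 x).
Proof. exact: pGfE. Qed.
Definition qIP n (p1 q1 s1 a1 a2 p2 q2 s2 b1 b2 : pexpr R n) := pIP ha hb hc hd he hf p1 q1 s1 a1 a2 p2 q2 s2 b1 b2.
Lemma qIPE n (p1 q1 s1 a1 a2 p2 q2 s2 b1 b2 : pexpr R n) x : peval (qIP p1 q1 s1 a1 a2 p2 q2 s2 b1 b2) x = IP ha hb hc hd he hf (cGa (peval p1 x) (peval q1 x) (peval s1 x) (peval a1 x) (peval a2 x) (peval p2 x) (peval q2 x) (peval s2 x) (peval b1 x) (peval b2 x)) (cGb (peval p1 x) (peval q1 x) (peval s1 x) (peval a1 x) (peval a2 x) (peval p2 x) (peval q2 x) (peval s2 x) (peval b1 x) (peval b2 x)) (cGc (peval p1 x) (peval q1 x) (peval s1 x) (peval a1 x) (peval a2 x) (peval p2 x) (peval q2 x) (peval s2 x) (peval b1 x) (peval b2 x)) (cGd (peval p1 x) (peval q1 x) (peval s1 x) (peval a1 x) (peval a2 x) (peval p2 x) (peval q2 x) (peval s2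 x) (peval b1 x) (peval b2 x)) (cGe (peval p1 x) (peval q1 x) (peval s1 x) (peval a1 x) (peval a2 x) (peval p2 x) (peval q2 x) (peval s2 x) (peval b1 x) (peval b2 x)) (cGf (peval p1 x) (peval q1 x) (peval s1 x) (peval a1 x) (peval a2 x) (peval p2 x) (peval q2 x) (peval s2 x) (peval b1 x) (peval b2 x)).
Proof. exact: pIPE. Qed.


Definition F14 : sformula R 14 :=
  let V := fun k => pv R (@inord 13 k) in
  let Ga := qGa (V 0%N) (V 1%N) (V 2%N) (V 3%N) (V 4%N) (V 5%N) (V 6%N) (V 7%N) (V 8%N) (V 9%N) in
  let Gb := qGb (V 0%N) (V 1%N) (V 2%N) (V 3%N) (V 4%N) (V 5%N) (V 6%N) (V 7%N) (V 8%N) (V 9%N) in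
  let Gc := qGc (V 0%N) (V 1%N) (V 2%N) (V 3%N) (V 4%N) (V 5%N) (V 6%N) (V 7%N) (V 8%N) (V 9%N) in
  let Gd := qGd (V 0%N) (V 1%N) (V 2%N) (V 3%N) (V 4%N) (V 5%N) (V 6%N) (V 7%N) (V 8%N) (V 9%N) in
  let Ge := qGe (V 0%N) (V 1%N) (V 2%N) (V 3%N) (V 4%N) (V 5%N) (V 6%N) (V 7%N) (V 8%N) (V 9%N) in
  let Gf := qGf (V 0%N) (V 1%N) (V 2%N) (V 3%N) (V 4%N) (V 5%N) (V 6%N) (V 7%N) (V 8%N) (V 9%N) in
  let I := qIP (V 0%N) (V 1%N) (V 2%N) (V 3%N) (V 4%N) (V 5%N) (V 6%N) (V 7%N) (V 8%N) (V 9%N) in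
  let c := pc 14 in
  SAnd (SPos (V 0%N)) (SAnd (SZero (psub (psub (PMul (V 0%N) (V 2%N)) (PMul (V 1%N) (V 1%N))) (c 1)))
  (SAnd (SPos (V 5%N)) (SAnd (SZero (psub (psub (PMul (V 5%N) (V 7%N)) (PMul (V 6%N) (V 6%N))) (c 1)))
  (SAnd (SNot (SZero I))
  (SAnd (SZero (psub (PMul Ga (c (Hn ha hb hc hd he hf))) (PMul I (c ha))))
  (SAnd (SZero (psub (PMul Gb (c (Hn ha hb hc hd he hf))) (PMul I (c hb))))
  (SAnd (SZero (psub (PMul Gc (c (Hn ha hb hc hd he hf))) (PMul I (c hc))))
  (SAnd (SZero (psub (PMul Gd (c (Hn ha hb hc hd he hf))) (PMul I (c hd))))
  (SAnd (SZero (psub (PMul Ge (c (Hn ha hb hc hd he hf))) (PMul I (c he))))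
  (SAnd (SZero (psub (PMul Gf (c (Hn ha hb hc hd he hf))) (PMul I (c hf))))
  (SAnd (SZero (psub (V 10%N) (V 0%N)))
  (SAnd (SZero (psub (V 11%N) (V 1%N)))
  (SAnd (SZero (psub (V 12%N) (puu1 ha hb hc hd he (V 0%N) (V 1%N) (V 3%N) (V 4%N))))
        (SZero (psub (V 13%N) (puu2 ha hb hc hd he (V 1%N) (V 2%N) (V 3%N) (V 4%N))))))))))))))))).

Opaque qGa qGb qGc qGd qGe qGf qIP puu1 puu2.
Lemma F14_iff (w : 'I_14 -> R) :
  let W := fun k => w (@inord 13 k) in
  let Ga := cGa (W 0%N) (W 1%N) (W 2%N) (W 3%N) (W 4%N) (W 5%N) (W 6%N) (W 7%N) (W 8%N) (W 9%N) in
  let Gb := cGb (W 0%N) (W 1%N) (W 2%N) (W 3%N) (W 4%N) (W 5%N) (W 6%N) (W 7%N) (W 8%N) (W 9%N) in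
  let Gc := cGc (W 0%N) (W 1%N) (W 2%N) (W 3%N) (W 4%N) (W 5%N) (W 6%N) (W 7%N) (W 8%N) (W 9%N) in
  let Gd := cGd (W 0%N) (W 1%N) (W 2%N) (W 3%N) (W 4%N) (W 5%N) (W 6%N) (W 7%N) (W 8%N) (W 9%N) in
  let Ge := cGe (W 0%N) (W 1%N) (W 2%N) (W 3%N) (W 4%N) (W 5%N) (W 6%N) (W 7%N) (W 8%N) (W 9%N) in
  let Gf := cGf (W 0%N) (W 1%N) (W 2%N) (W 3%N) (W 4%N) (W 5%N) (W 6%N) (W 7%N) (W 8%N) (W 9%N) in
  let I := IP ha hb hc hd he hf Ga Gb Gc Gd Ge Gf in
  let N := Hn ha hb hc hd he hf in
  sholds F14 w <->
  0 < W 0%N /\ W 0%N * W 2%N - W 1%N * W 1%N - 1 = 0 /\ 0 < W 5%N /\ W 5%N * W 7%N - W 6%N * W 6%N - 1 = 0 /\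
  ~ (I = 0) /\ Ga * N - I * ha = 0 /\ Gb * N - I * hb = 0 /\ Gc * N - I * hc = 0 /\
  Gd * N - I * hd = 0 /\ Ge * N - I * he = 0 /\ Gf * N - I * hf = 0 /\
  W 10%N - W 0%N = 0 /\ W 11%N - W 1%N = 0 /\ W 12%N - uu1 (W 0%N) (W 1%N) (W 3%N) (W 4%N) = 0 /\
  W 13%N - uu2 (W 1%N) (W 2%N) (W 3%N) (W 4%N) = 0.
Proof.
move=> W Ga Gb Gc Gd Ge Gf I N.
rewrite /F14; cbn [sholds peval psub pc pv].
rewrite !qIPE !qGaE !qGbE !qGcE !qGdE !qGeE !qGfE !puu1E ?puu2E.
cbn [peval psub pc pv].
exact: iff_refl.
Qed.

Lemma subr0_iff' (a b : R) : a - b = 0 <-> a = b.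
Proof. by split => [/eqP|->]; [rewrite subr_eq0 => /eqP | rewrite subrr]. Qed.

Lemma ord14 (Pr : 'I_14 -> Prop) : (forall k, (k < 14)%N -> Pr (inord k)) -> forall i, Pr i.
Proof. by move=> HP i; rewrite -(inord_val i); apply: HP. Qed.

Lemma graph_iff w : restricted_graph D Phi w <-> sholds F14 w.
Proof.
rewrite F14_iff.
split.
  move=> [P [DP Hw]].
  have [sP1 [sP2 GP]] := D_good DP.
  have [Hp1 [dA [Hp2 [dB Hex]]]] := GP.
  have W : forall k, (k < 14)%N -> w (inord k) =
     if (k < 10)%N then encode_pair P (inord k) else Phi P (inord (k - 10)).
    by move=> k Hk; rewrite Hw inordK.
  rewrite !W //= /encode_pair /Phi !inordK //=.
  have [HI HE] := iffLR (prop_iff hd he hf Hdisc _ _ _ _ _ _) Hex.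
  rewrite -!expr2 dA dB subrr !subrr.
  move: HE => [E1 [E2 [E3 [E4 [E5 E6]]]]]; by do 14 (split => //).
move=> [Hp1 [dA [Hp2 [dB [HI [Ea [Eb [Ec [Ed [Ee [Ef [E10 [E11 [E12 E13]]]]]]]]]]]]]].
set W := fun k => w (@inord 13 k).
exists (mkP (W 0%N) (W 1%N) (W 2%N) (W 3%N) (W 4%N) (W 5%N) (W 6%N) (W 7%N) (W 8%N) (W 9%N)).
split.
  apply/(D_iff Hdisc Hh0 HH); rewrite /mkP /goodP /= !mxE /=.
  split => //; split => //.
  split => //; split; first by apply/subr0_iff'; rewrite -expr2 in dA.
  split => //; split; first by apply/subr0_iff'; rewrite -expr2 in dB.
  by apply/(prop_iff hd he hf Hdisc).
apply: ord14 => k Hk; rewrite inordK //.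
move/subr0_iff': E10 => E10; move/subr0_iff': E11 => E11.
move/subr0_iff': E12 => E12; move/subr0_iff': E13 => E13.
do 10 (case: k Hk => [|k] Hk; first by rewrite /encode_pair /Phi ?inordK //= ?mxE /= ?E10 ?E11 ?E12 ?E13).
do 4 (case: k Hk => [|k] Hk; first by rewrite /Phi ?inordK //= ?mxE /= ?E10 ?E11 ?E12 ?E13).
by [].
Qed.

End Fin.

End T13.
Import T13.

Module T14.
Set Implicit Arguments. Unset Strict Implicit.
Local Open Scope ring_scope.

Section Dim.
Variable R : realType.
Variables ha hb hc hd he hf : R.
Hypothesis Hdisc : 0 < hb ^+ 2 - 4 * ha * hc.

Local Notation h0 := (h0 ha hb hc hd he hf).
Local Notation TT := (TT ha hb hc).
Local Notation Kq := (Kq ha hb hc hd he hf).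
Local Notation S := (S ha hb hc hd he hf).

Lemma half_lt1 : (1 / 2 : R) < 1.
Proof. rewrite ltr_pdivrMr // mul1r; lra. Qed.

Lemma solve_u2 : exists U, forall u1, `|u1 - U| < 1 / 2 -> exists u2, Kq u1 u2 = 0.
Proof.
have [Ha|Ha] := eqVneq ha 0.
  have Hb : hb != 0.
    by apply/eqP => Hb; move: Hdisc; rewrite Hb Ha expr0n /= mulr0 mul0r subrr ltxx.
  exists 1 => u1 Hu.
  have Hu1 : u1 != 0.
    apply/eqP => E; move: Hu; rewrite E sub0r normrN normr1 => Hu.
    have := half_lt1; lra.
  exists ((hc * u1 ^+ 2 - h0) / (hb * u1)).
  rewrite /T9.Kq Ha; field.
  by rewrite Hu1 Hb.
set Dd := hb ^+ 2 - 4 * ha * hc.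
set L := 1 + `|4 * ha * h0| / Dd.
exists (L + 1) => u1 Hu.
have HL : 1 <= L by rewrite /L lerDl divr_ge0 // ?normr_ge0 // ltW.
have Hu1 : L < u1.
  move: Hu; rewrite ltr_norml => /andP [H1 _].
  have : - (1/2) < u1 - (L + 1) by [].
  have := half_lt1; lra.
have Hdisc2 : 0 < Dd * u1 ^+ 2 + 4 * ha * h0.
  have HDL : Dd * L = Dd + `|4 * ha * h0|.
    by rewrite /L mulrDr mulr1 mulrCA divff ?mulr1 // gt_eqF.
  have H1 : Dd * L < Dd * u1 by rewrite ltr_pM2l.
  have H2 : Dd * u1 <= Dd * u1 ^+ 2.
    rewrite ler_pM2l // expr2 ler_peMl //; lra.
  have H3 : - (4 * ha * h0) <= `|4 * ha * h0| by rewrite -normrN ler_norm.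
  have : 0 < Dd by [].
  lra.
set disc := Dd * u1 ^+ 2 + 4 * ha * h0 in Hdisc2.
have Hr : Num.sqrt disc ^+ 2 = disc by rewrite sqr_sqrtr // ltW.
exists ((hb * u1 + Num.sqrt disc) / (2 * ha)).
move: Hr; rewrite /disc /Dd => Hr.
rewrite /T9.Kq; lcf (mulE (1 / (4 * ha)) Hr).
Qed.

Lemma TT_point : exists q0, TT 1 q0 != 0.
Proof.
have [E0|E0] := eqVneq (TT 1 0) 0; last by exists 0.
have [E1|E1] := eqVneq (TT 1 1) 0; last by exists 1.
have [E2|E2] := eqVneq (TT 1 (-1)) 0; last by exists (-1).
exfalso; move: E0 E1 E2; rewrite /T9.TT => E0 E1 E2.
have Hb : hb = 0 by lcf (addE (mulE (-1/2) E1) (mulE (1/2) E2)).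
have Ha : ha = 0 by lcf (addE (addE (mulE (-1) E0) (mulE (1/2) E1)) (mulE (1/2) E2)).
have Hc : hc = 0 by lcf (addE (mulE 2 E0) (addE (mulE (-1/2) E1) (mulE (-1/2) E2))).
by move: Hdisc; rewrite Ha Hb Hc expr0n /= !mulr0 subrr ltxx.
Qed.

Definition f3 (i : 'I_3) : 'I_4 := widen_ord (leqnSn 3) i.

Lemma f3_inj : injective f3.
Proof. by move=> i j /(congr1 val) /= E; apply: val_inj. Qed.

Lemma ord3 (i : 'I_3) : i = inord 0 \/ i = inord 1 \/ i = inord 2.
Proof.
case: i => [[|[|[|k]]] Hk] //.
- by left; apply/val_inj; rewrite /= inordK.
- by right; left; apply/val_inj; rewrite /= inordK.
- by right; right; apply/val_inj; rewrite /= inordK.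
Qed.

Lemma interior3 : has_interior (coord_proj f3 S).
Proof.
have [q0 Hq0] := TT_point.
have [U HU] := solve_u2.
pose y0 : 'I_3 -> R := fun i => [:: 1; q0; U]`_i.
pose pe : pexpr R 3 := pTT ha hb hc (pv R (inord 0)) (pv R (inord 1)).
have Hpe : peval pe y0 != 0 by rewrite pTTE /= /y0 !inordK.
have [d [Hd Hnear]] := near_neq0 Hpe.
have Hh : (0 : R) < 1 / 2 by rewrite divr_gt0.
exists y0, (Num.min d (1 / 2)); split; first by rewrite lt_min Hd.
move=> y Hy.
have Hyd : forall i, `|y i - y0 i| < d by move=> i; have := Hy i; rewrite lt_min => /andP[].
have Hyh : forall i, `|y i - y0 i| < 1 / 2 by move=> i; have := Hy i; rewrite lt_min => /andP[].
have HT : TT (y (inord 0)) (y (inord 1)) != 0 by have := Hnear _ Hyd; rewrite /pe pTTE.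
have Hp : 0 < y (inord 0).
  have := Hyh (inord 0); rewrite /y0 inordK //= ltr_norml => /andP [H1 _].
  have := half_lt1; lra.
have [u2 Hu2] : exists u2, Kq (y (inord 2)) u2 = 0.
  apply: HU; have := Hyh (inord 2); by rewrite /y0 inordK.
exists (fun i : 'I_4 => [:: y (inord 0); y (inord 1); y (inord 2); u2]`_i); split.
  by apply/S_iff; rewrite !inordK.
move=> j; rewrite /f3 /=.
by case: (ord3 j) => [->|[->|->]]; rewrite inordK.
Qed.

Lemma no_interior4 (f : 'I_4 -> 'I_4) : injective f -> ~ has_interior (coord_proj f S).
Proof.
move=> finj [y0 [e [He Hin]]].
set g := invF finj.
have fg := f_invF finj.
set j2 := g (inord 2); set j3 := g (inord 3).
have Hj23 : j2 != j3.
  apply/eqP => E; have := congr1 f E; rewrite /j2 /j3 !fg => /(congr1 val).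
  by rewrite /= !inordK.
have Hball : forall y1 y2, `|y1 - y0 j2| < e -> `|y2 - y0 j3| < e -> Kq y1 y2 = 0.
  move=> y1 y2 H1 H2.
  pose y := fun j => if j == j2 then y1 else if j == j3 then y2 else y0 j.
  have Hy : forall j, `|y j - y0 j| < e.
    move=> j; rewrite /y; case: eqP => [->|_] //; case: eqP => [->|_] //.
    by rewrite subrr normr0.
  have [x [Sx Ex]] := Hin y Hy.
  have X2 : x (inord 2) = y1 by rewrite -[inord 2]fg -/j2 -Ex /y eqxx.
  have X3 : x (inord 3) = y2 by rewrite -[inord 3]fg -/j3 -Ex /y eq_sym (negbTE Hj23) eqxx.
  by have [_ [_ HK]] := iffLR (S_iff _ _ _ _ _ _ x) Sx; rewrite -X2 -X3.
have Hq : forall y1 y2, `|y1 - y0 j2| < e -> `|y2 - y0 j3| < e ->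
    qp hc (- hb) ha 0 0 (- h0) y1 y2 = 0.
  move=> y1 y2 H1 H2; rewrite -[RHS](Hball y1 y2 H1 H2) /qp /T9.Kq; ring.
have [Hc [Hb [Ha _]]] := ball_poly He Hq.
move: Hdisc; rewrite Ha (_ : hb = 0); last by rewrite -[hb]opprK Hb oppr0.
by rewrite Hc expr0n /= !mulr0 subrr ltxx.
Qed.

Lemma det_h0 :
  ha * (hc * hf - he / 2 * (he / 2)) - hb / 2 * (hb / 2 * hf - he / 2 * (hd / 2))
  + hd / 2 * (hb / 2 * (he / 2) - hc * (hd / 2)) = del ha hb hc * h0.
Proof.
rewrite /T3.h0 /T3.x01 /T3.x02 /T3.del /qp; field.
exact: den_neq0.
Qed.

End Dim.

End T14.
Import T14.

Unset Implicit Arguments.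
Set Strict Implicit.

Theorem theorem5p3 (R : realType) (H : R * R -> Prop) :
  hyperbola H ->
  (exists P : cone_param R * cone_param R, cone_pairs_over H P) /\
  (exists (S : ('I_4 -> R) -> Prop) (Phi : cone_param R * cone_param R -> 'I_4 -> R),
     semialgebraic S /\ sa_dim S 3 /\
     semialgebraic (restricted_graph (cone_pairs_over H) Phi) /\
     (forall P, cone_pairs_over H P -> S (Phi P)) /\
     (forall P Q, cone_pairs_over H P -> cone_pairs_over H Q ->
        (forall i, Phi P i = Phi Q i) -> P = Q) /\
     (forall s, S s -> exists P, cone_pairs_over H P /\ forall i, Phi P i = s i)).
Proof.
move=> [a [b [c [d [e [f [Hdisc [Hdet HH]]]]]]]].
have Hh0 : h0 a b c d e f != 0.
  move: Hdet; rewrite det3 (det_h0 d e f Hdisc) mulf_eq0 negb_or => /andP [_ ->] //.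
have HH' : forall p : R * R, H p <-> qp a b c d e f p.1 p.2 = 0 by [].
split.
  have [y0 [r [Hr Hin]]] := interior3 d e f Hdisc.
  have Hy0 : forall i, `|y0 i - y0 i| < r by move=> i; rewrite subrr normr0.
  have [x [Sx _]] := Hin y0 Hy0.
  have [P [DP _]] := Phi_surj Hdisc Hh0 HH' Sx.
  by exists P.
exists (T13.S a b c d e f), (T13.Phi a b c d e).
split; first by exists (FS a b c d e f).
split.
  split.
    exists f3; split; [exact: f3_inj | exact: interior3].
  exact: no_interior4.
split; first by exists (F14 a b c d e f) => w; exact: (graph_iff Hdisc Hh0 HH' w).
split; first by move=> P; exact: (PhiS Hdisc Hh0 HH').
split; first by move=> P Q; exact: (Phi_inj Hdisc Hh0 HH').
by move=> s; exact: (Phi_surj Hdisc Hh0 HH').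
Qed.
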